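(* Let $n$ be a positive integer. If $n\equiv 1\pmod 4$, then \[ \sum_{k=0}^{n-1}\frac{(q;q^4)_k^2}{(q^4;q^4)_k^2}\,q^{2k}\equiv \frac{(q^{3};q^4)_{(n-1)/4}}{(q^4;q^4)_{(n-1)/4}}\pmod{\Phi_n(q)}, \] and if $n\equiv 3\pmod 4$, then \[ \sum_{k=0}^{n-1}\frac{(q;q^4)_k^2}{(q^4;q^4)_k^2}\,q^{2k}\equiv 0\pmod{\Phi_n(q)}. \]
   Context: For an indeterminate (or complex number) $a$ and a nonnegative integer $k$, the $q$-Pochhammer symbol is $(a;q)_k=\prod_{j=0}^{k-1}(1-aq^j)$, with $(a;q)_0=1$. $\Phi_n(q)=\prod_{1\le j\le n,\ \gcd(j,n)=1}(q-e^{2\pi i j/n})$ denotes the $n$-th cyclotomic polynomial. A congruence between rational functions in $q$ modulo a polynomial $P(q)$ means that the difference, written as a ratio of polynomials with denominator coprime to $P(q)$, has numerator divisible by $P(q)$. *)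

(* Defs.v *)
From HB Require Import structures.
From mathcomp Require Import all_boot all_order all_algebra all_field.
Set Implicit Arguments. Unset Strict Implicit. Unset Printing Implicit Defensive.
Import Order.TTheory GRing.Theory Num.Theory.
Local Open Scope ring_scope.

Notation ratfun := {fraction {poly rat}}.

Definition qv : ratfun := tofrac 'X.

Definition qpoch (F : comRingType) (a b : F) (k : nat) : F :=
  \prod_(j < k) (1 - a * b ^+ j).

Definition PhiQ (n : nat) : {poly rat} := map_poly (fun z : int => z%:~R) 'Phi_n.

Definition cong_ratfun (f g : ratfun) (P : {poly rat}) : Prop :=
  exists N D : {poly rat},
    [/\ D != 0, coprimep D P, P %| N & f - g = tofrac N / tofrac D].

Definition lhs_sum (n : nat) : ratfun :=
  \sum_(0 <= k < n)
     (qpoch qv (qv ^+ 4) k) ^+ 2 / (qpoch (qv ^+ 4) (qv ^+ 4) k) ^+ 2 * qv ^+ (2 * k).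

(* Main.v *)
Require Import Defs.
From HB Require Import structures.
From mathcomp Require Import all_boot all_order all_algebra all_field.
From mathcomp Require Import ring zify.
Import Order.TTheory GRing.Theory Num.Theory.
Local Open Scope ring_scope.

Module Gm.
Local Open Scope ring_scope.
Set Implicit Arguments. Unset Strict Implicit.

Section Gauss.
Variables (F : fieldType) (p : F).

Definition EE (a : F) (s : nat) : {poly F} := \prod_(j < s) (1 + (a * p ^+ j) *: 'X).
Definition cc s k := (EE 1 s)`_k.

Lemma EE_S a s : EE a s.+1 = EE a s + (a * p ^+ s) *: (EE a s * 'X).
Proof. by rewrite /EE big_ord_recr /= mulrDr mulr1 scalerAr. Qed.

Lemma coefEE_S0 a s : (EE a s.+1)`_0 = (EE a s)`_0.
Proof. by rewrite EE_S coefD coefZ coefMX /= mulr0 addr0. Qed.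

Lemma coefEE_SS a s k : (EE a s.+1)`_k.+1 = (EE a s)`_k.+1 + a * p ^+ s * (EE a s)`_k.
Proof. by rewrite EE_S coefD coefZ coefMX. Qed.

Lemma coefEE0 a s : (EE a s)`_0 = 1.
Proof. elim: s => [|s IH]; first by rewrite /EE big_ord0 coef1. by rewrite coefEE_S0. Qed.

Lemma coefEE_big a s k : (s < k)%N -> (EE a s)`_k = 0.
Proof.
elim: s k => [|s IH] [|k] //= hk.
  by rewrite /EE big_ord0 coef1.
rewrite coefEE_SS (IH k.+1) ?(IH k) ?mulr0 ?addr0 //; exact: ltnW.
Qed.

Lemma coefEE a s k : (EE a s)`_k = a ^+ k * cc s k.
Proof.
rewrite /cc; elim: s k => [|s IH] [|k].
- by rewrite !coefEE0 mulr1.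
- by rewrite /EE !big_ord0 !coef1 /= mulr0.
- by rewrite !coefEE0 mulr1.
- by rewrite !coefEE_SS !IH mul1r exprS; ring.
Qed.

Lemma cc_ratio s k : cc s k.+1 * (1 - p ^+ k.+1) = cc s k * (p ^+ k - p ^+ s).
Proof.
rewrite /cc; elim: s k => [|s IH] k.
  rewrite coefEE_big // mul0r; case: k => [|k]; first by rewrite !expr0 subrr mulr0.
  by rewrite coefEE_big // !mul0r.
case: k => [|k].
  rewrite coefEE_SS !coefEE0 mul1r.
  have := IH 0%N; rewrite coefEE0 => H.
  rewrite mulrDl H !expr1 expr0 exprS; ring.
rewrite !coefEE_SS !mul1r.
have H1 := IH k.+1; have H2 := IH k.
apply/eqP; rewrite -subr_eq0; apply/eqP.
set c2 := (EE 1 s)`_k.+2 in H1 *; set c1 := (EE 1 s)`_k.+1 in H1 H2 *; set c0 := (EE 1 s)`_k in H2 *.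
transitivity ((c2 * (1 - p ^+ k.+2) - c1 * (p ^+ k.+1 - p ^+ s)) + p * p ^+ s * (c1 * (1 - p ^+ k.+1) - c0 * (p ^+ k - p ^+ s))).
  rewrite !exprS; ring.
by rewrite H1 H2 !subrr mulr0 addr0.
Qed.

Lemma cc_prod s k : cc s k * \prod_(i < k) (1 - p ^+ i.+1) = \prod_(i < k) (p ^+ i - p ^+ s).
Proof.
elim: k => [|k IH]; first by rewrite !big_ord0 mulr1 /cc coefEE0.
by rewrite !big_ord_recr /= mulrCA cc_ratio mulrA [_ * cc s k]mulrC IH.
Qed.


Definition BB s : {poly F} := \prod_(j < s) ('X + (p ^+ j)%:P).

Lemma BB_S s : BB s.+1 = BB s * 'X + BB s * (p ^+ s)%:P.
Proof. by rewrite /BB big_ord_recr /= mulrDr. Qed.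

Lemma coefBB_S0 s : (BB s.+1)`_0 = (BB s)`_0 * p ^+ s.
Proof. by rewrite BB_S coefD coefMX coefMC add0r. Qed.

Lemma coefBB_SS s i : (BB s.+1)`_i.+1 = (BB s)`_i + (BB s)`_i.+1 * p ^+ s.
Proof. by rewrite BB_S coefD coefMX coefMC. Qed.

Lemma coefBB_big s i : (s < i)%N -> (BB s)`_i = 0.
Proof.
elim: s i => [|s IH] [|i] //= hi.
  by rewrite /BB big_ord0 coef1.
rewrite coefBB_SS (IH i) ?(IH i.+1) ?mul0r ?addr0 //; exact: ltnW.
Qed.

Lemma coefBB s i k : (i + k = s)%N -> (BB s)`_i = cc s k.
Proof.
rewrite /cc; elim: s i k => [|s IH] i k.
  move=> /eqP; rewrite addn_eq0 => /andP[/eqP -> /eqP ->].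
  by rewrite /BB /EE !big_ord0.
case: i => [|i].
  by rewrite add0n => ->; rewrite coefBB_S0 coefEE_SS (IH 0%N s) // (@coefEE_big 1 s s.+1 (ltnSn s)) add0r mul1r mulrC.
case: k => [|k].
  rewrite addn0 => -[->]; rewrite coefBB_SS coefEE_S0 coefEE0 (@coefBB_big s s.+1 (ltnSn s)) mul0r addr0.
  by rewrite (IH s 0%N) ?addn0 // coefEE0.
rewrite addSn => -[hs]; rewrite coefBB_SS coefEE_SS (IH i k.+1) ?(IH i.+1 k) ?addSn -?addnS //.
by rewrite mul1r mulrC.
Qed.

Lemma BB_EE a s : a * p ^+ s.-1 = 1 -> BB s = (\prod_(j < s) p ^+ j) *: EE a s.
Proof.
move=> ha.
have -> : BB s = \prod_(j < s) (p ^+ j *: (1 + (a * p ^+ (s - j.+1)) *: 'X)).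
  apply: eq_bigr => j _.
  rewrite scalerDr scalerA -alg_polyC addrC; congr (_ + _).
  have -> : p ^+ j * (a * p ^+ (s - j.+1)) = a * p ^+ s.-1.
    rewrite mulrCA -exprD; congr (_ * p ^+ _); have := ltn_ord j; lia.
  by rewrite ha scale1r.
rewrite scaler_prod /EE; congr (_ *: _).
rewrite (reindex_inj rev_ord_inj) /=; apply: eq_bigr => j _.
by rewrite subnSK // subKn // ltnW.
Qed.

Lemma EE_split a s : EE a s * EE (a * p ^+ s) s = EE a (s + s).
Proof.
rewrite /EE big_split_ord /=; congr (_ * _); apply: eq_bigr => j _.
by rewrite exprD mulrA.
Qed.

Lemma vandermonde a s : a * p ^+ s.-1 = 1 ->
  \sum_(k < s.+1) p ^+ k * cc s k ^+ 2 = (\prod_(j < s) p ^+ j) * a ^+ s * cc (s + s) s.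
Proof.
move=> ha.
have H : EE p s * BB s = (\prod_(j < s) p ^+ j) *: EE a (s + s).
  rewrite (@BB_EE a s ha) -scalerAr mulrC -EE_split; congr (_ *: (_ * _)).
  case: s ha => [|s] ha; first by rewrite /EE !big_ord0.
  by move: ha => /= ha; rewrite exprSr mulrA ha mul1r.
have := congr1 (fun q : {poly F} => q`_s) H; rewrite coefM coefZ coefEE mulrA => <-.
apply: eq_bigr => k _; rewrite coefEE (@coefBB s (s - k)%N k) ?subnK ?expr2 ?mulrA //.
by rewrite -ltnS.
Qed.

End Gauss.

End Gm.
Import Gm.

Module Rm.
Local Open Scope ring_scope.

Section Root.
Variables (z : algC) (n : nat).
Hypothesis prim : n.-primitive_root z.
Hypothesis nodd : odd n.
Local Notation p := (z ^+ 4).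

Lemma zn : z ^+ n = 1. Proof. exact: prim_expr_order. Qed.
Lemma pn : p ^+ n = 1. Proof. by rewrite -exprM mulnC exprM zn expr1n. Qed.

Lemma p_neq1 m : (0 < m < n)%N -> 1 - p ^+ m != 0.
Proof.
case/andP=> m0 mn; rewrite subr_eq0 eq_sym -exprM -(prim_order_dvd prim).
rewrite Gauss_dvdr; last by rewrite (_ : 4 = 2 ^ 2)%N // coprime_pexpr // coprimen2.
by apply/negP => /(dvdn_leq m0); rewrite leqNgt mn.
Qed.

Lemma qpochpp k : qpoch p p k = \prod_(i < k) (1 - p ^+ i.+1).
Proof. by rewrite /qpoch; apply: eq_bigr => i _; rewrite -exprS. Qed.

Lemma D_neq0 k : (k < n)%N -> qpoch p p k != 0.
Proof.
move=> kn; rewrite qpochpp; apply/prodf_neq0 => i _; apply: p_neq1.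
by rewrite ltn0Sn /= (leq_ltn_trans _ kn).
Qed.

Lemma term s k : z ^+ (4 * s + 1) = 1 -> (k < n)%N ->
  qpoch z p k ^+ 2 / qpoch p p k ^+ 2 * z ^+ (2 * k) = p ^+ k * cc p s k ^+ 2.
Proof.
move=> hs kn.
have hD := @D_neq0 k kn.
have hc : cc p s k * qpoch p p k = (- p ^+ s) ^+ k * qpoch z p k.
  rewrite qpochpp cc_prod /qpoch.
  transitivity (\prod_(i < k) (- p ^+ s * (1 - z * p ^+ i))); last first.
    by rewrite big_split /= prodr_const card_ord.
  apply: eq_bigr => i _.
  have : p ^+ s * z = 1 by rewrite -exprM -exprSr addn1 in hs *.
  move=> h; rewrite mulrBr mulr1 mulrA mulNr h; ring.
have hc' : cc p s k = (- p ^+ s) ^+ k * qpoch z p k / qpoch p p k.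
  by rewrite -hc mulfK.
have hz : z ^+ (2 * k) = p ^+ k * (p ^+ s) ^+ (2 * k).
  rewrite -!exprM -exprD.
  have -> : (4 * k + 4 * (s * (2 * k)) = 2 * k + (4 * s + 1) * (2 * k))%N by nia.
  by rewrite exprD [z ^+ ((4 * s + 1) * _)]exprM hs expr1n mulr1.
rewrite hc' hz.
rewrite exprNn.
have -> : (p ^+ s) ^+ (2 * k) = ((p ^+ s) ^+ k) ^+ 2 by rewrite mulnC exprM.
move: hD; set X := (p ^+ s) ^+ k; set N := qpoch z p k; set D := qpoch p p k.
set S := (-1) ^+ k; set P := p ^+ k => hD.
have hm : S ^+ 2 = 1 by rewrite sqrr_sign.
rewrite -mulrA -mulrA 2!exprMn hm mul1r.
by field.
Qed.



Lemma lhs_val s : z ^+ (4 * s + 1) = 1 -> (s < n)%N ->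
  \sum_(0 <= k < n) qpoch z p k ^+ 2 / qpoch p p k ^+ 2 * z ^+ (2 * k)
  = (\prod_(j < s) p ^+ j) * (p ^+ (n - s.-1)) ^+ s * cc p (s + s) s.
Proof.
move=> hs sn.
rewrite big_mkord (eq_bigr (fun k : 'I_n => p ^+ k * cc p s k ^+ 2)); last first.
  by move=> k _; rewrite (@term s k hs (ltn_ord k)).
rewrite -vandermonde; last first.
  by rewrite -exprD subnK ?pn // (leq_trans (leq_pred s)) // ltnW.
rewrite (big_ord_widen n (fun k => p ^+ k * cc p s k ^+ 2) sn) [RHS]big_mkcond /=.
apply: eq_bigr => k _; case: ifP => // hk.
rewrite /cc coefEE_big ?expr0n ?mulr0 //.
by rewrite ltnNge -ltnS hk.
Qed.

Lemma case3 r : n = (4 * r + 3)%N -> cc p ((3 * r + 2) + (3 * r + 2)) (3 * r + 2) = 0.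
Proof.
move=> hn.
have sn : (3 * r + 2 < n)%N by rewrite hn; lia.
have hD := @D_neq0 _ sn.
have := cc_prod p ((3 * r + 2) + (3 * r + 2)) (3 * r + 2).
have -> : \prod_(i < 3 * r + 2) (p ^+ i - p ^+ ((3 * r + 2) + (3 * r + 2))) = 0.
  apply/eqP/prodf_eq0.
  have hi : (2 * r + 1 < 3 * r + 2)%N by lia.
  exists (Ordinal hi) => //=.
  have -> : ((3 * r + 2) + (3 * r + 2) = (2 * r + 1) + n)%N by rewrite hn; lia.
  by rewrite [p ^+ (_ + n)]exprD pn mulr1 subrr.
rewrite -qpochpp => /eqP; rewrite mulf_eq0 (negbTE hD) orbF => /eqP.
done.
Qed.

Lemma case1 r : n = (4 * r + 1)%N ->
  (\prod_(j < r) p ^+ j) * (p ^+ (n - r.-1)) ^+ r * cc p (r + r) r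
  = qpoch (z ^+ 3) p r / qpoch p p r.
Proof.
move=> hn.
have rn : (r < n)%N by rewrite hn; lia.
have hD := @D_neq0 _ rn.
set P := \prod_(j < r) p ^+ j; set a := p ^+ (n - r.-1).
have ha : a * p ^+ r.-1 = 1 by rewrite -exprD subnK ?pn // (leq_trans (leq_pred r)) // ltnW.
have hP : P * a ^+ r * P = 1.
  have -> : P * a ^+ r = \prod_(j < r) (p ^+ j * a).
    by rewrite big_split /= prodr_const card_ord.
  have -> : P = \prod_(j < r) p ^+ (r - j.+1).
    by rewrite /P (reindex_inj rev_ord_inj).
  rewrite -big_split /=; rewrite big1 // => j _.
  rewrite mulrC mulrA -exprD mulrC.
  have -> : (r - j.+1 + j = r.-1)%N by have := ltn_ord j; lia.
  exact: ha.
have hN : \prod_(i < r) (p ^+ i - p ^+ (r + r)) = P * qpoch (z ^+ 3) p r.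
  rewrite /qpoch [X in _ = _ * X](reindex_inj rev_ord_inj) /= /P -big_split /=.
  apply: eq_bigr => i _.
  have hi := ltn_ord i.
  rewrite mulrBr mulr1 mulrCA -exprD -!exprM -exprD.
  have -> : (3 + 4 * (i + (r - i.+1)) = 4 * r - 1)%N by lia.
  have -> : (4 * (r + r) = (4 * r - 1) + n)%N by rewrite hn; lia.
  by rewrite exprD zn mulr1.
have hc := cc_prod p (r + r) r.
rewrite -qpochpp hN in hc.
have -> : cc p (r + r) r = P * qpoch (z ^+ 3) p r / qpoch p p r.
  by rewrite -hc mulfK.
rewrite mulrA mulrA hP mul1r.
done.
Qed.

End Root.

End Rm.
Import Rm.

Module Fm.
Local Open Scope ring_scope.

Lemma qpoch_rmorph (R S : comNzRingType) (f : {rmorphism R -> S}) a b k :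
  f (qpoch a b k) = qpoch (f a) (f b) k.
Proof.
rewrite /qpoch rmorph_prod; apply: eq_bigr => i _.
by rewrite rmorphB rmorph1 rmorphM rmorphXn.
Qed.

Section Eval.
Variables (z : algC) (n : nat).
Hypothesis prim : n.-primitive_root z.

Definition ev (A : {poly rat}) : algC := (map_poly ratr A).[z].

Lemma evE A : ev A = (horner_eval z \o map_poly ratr) A. Proof. by []. Qed.

Lemma ev_qpoch a b k : ev (qpoch a b k) = qpoch (ev a) (ev b) k.
Proof. by rewrite !evE qpoch_rmorph. Qed.

Lemma ev0 : ev 0 = 0. Proof. by rewrite evE rmorph0. Qed.
Lemma ev1 : ev 1 = 1. Proof. by rewrite evE rmorph1. Qed.
Lemma evX : ev 'X = z. Proof. by rewrite /ev map_polyX hornerX. Qed.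
Lemma evM A B : ev (A * B) = ev A * ev B. Proof. by rewrite !evE rmorphM. Qed.
Lemma evD A B : ev (A + B) = ev A + ev B. Proof. by rewrite !evE rmorphD. Qed.
Lemma evB A B : ev (A - B) = ev A - ev B. Proof. by rewrite !evE rmorphB. Qed.
Lemma evXn A k : ev (A ^+ k) = ev A ^+ k. Proof. by rewrite !evE rmorphXn. Qed.

Definition Rep (f : ratfun) (v : algC) :=
  exists A B : {poly rat}, [/\ ev B != 0, f = tofrac A / tofrac B & v = ev A / ev B].

Lemma ev_nz_frac B : ev B != 0 -> tofrac B != 0 :> ratfun.
Proof. by apply: contra => /eqP; rewrite -tofrac0 => /eqP; rewrite tofrac_eq => /eqP ->; rewrite ev0. Qed.

Lemma Rep_poly A : Rep (tofrac A) (ev A).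
Proof. exists A, 1; split; [by rewrite ev1 oner_eq0 | | by rewrite ev1 divr1].
by rewrite tofrac1 divr1. Qed.

Lemma Rep_add f g v w : Rep f v -> Rep g w -> Rep (f + g) (v + w).
Proof.
move=> [A [B [hB -> ->]]] [C [E [hE -> ->]]].
exists (A * E + C * B), (B * E); split.
- by rewrite evM mulf_neq0.
- have := @ev_nz_frac B hB; have := @ev_nz_frac E hE.
  move=> h1 h2.
  have := @addf_div ratfun (tofrac A) (tofrac B) (tofrac C) (tofrac E) h2 h1.
  by move=> ->; rewrite tofracD !tofracM.
- by rewrite evD !evM addf_div.
Qed.

Lemma Rep_mul f g v w : Rep f v -> Rep g w -> Rep (f * g) (v * w).
Proof.
move=> [A [B [hB -> ->]]] [C [E [hE -> ->]]].
exists (A * C), (B * E); split.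
- by rewrite evM mulf_neq0.
- have := @ev_nz_frac B hB; have := @ev_nz_frac E hE.
  move=> h1 h2.
  have := @mulf_div ratfun (tofrac A) (tofrac B) (tofrac C) (tofrac E).
  by move=> ->; rewrite !tofracM.
- by rewrite !evM mulf_div.
Qed.

Lemma Rep_opp f v : Rep f v -> Rep (- f) (- v).
Proof.
move=> [A [B [hB -> ->]]]; exists (- A), B; split => //.
- by rewrite tofracN mulNr.
- by rewrite /ev rmorphN hornerN mulNr.
Qed.

Lemma Rep_inv f v : Rep f v -> v != 0 -> Rep (f^-1) (v^-1).
Proof.
move=> [A [B [hB -> ->]]] hv; exists B, A.
have hA : ev A != 0 by apply: contraNneq hv => ->; rewrite mul0r.
by split => //; rewrite invf_div.
Qed.

Lemma Rep_exp f v k : Rep f v -> Rep (f ^+ k) (v ^+ k).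
Proof.
move=> h; elim: k => [|k IH]; first by rewrite !expr0 -tofrac1 -ev1; apply: Rep_poly.
by rewrite !exprS; apply: Rep_mul.
Qed.

Lemma Rep_sum m (F : nat -> ratfun) (G : nat -> algC) :
  (forall i, (i < m)%N -> Rep (F i) (G i)) ->
  Rep (\sum_(0 <= i < m) F i) (\sum_(0 <= i < m) G i).
Proof.
elim: m => [|m IH] h; first by rewrite !big_geq // -tofrac0 -ev0; apply: Rep_poly.
rewrite !big_nat_recr //=; apply: Rep_add; first by apply: IH => i hi; apply: h; exact: ltnW.
exact: h.
Qed.

End Eval.

End Fm.
Import Fm.

Module Km.
Local Open Scope ring_scope.

Section Key.
Variables (z : algC) (n : nat).
Hypothesis prim : n.-primitive_root z.

Lemma key q : (PhiQ n %| q) = (ev z q == 0).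
Proof.
have [pf [Dpf _] dv] := minCpolyP z.
have e : pf = PhiQ n.
  apply: (@map_inj_poly _ _ (ratr : rat -> algC)); [exact: fmorph_inj | exact: rmorph0 |].
  rewrite -Dpf (minCpoly_cyclotomic prim) -(Cintr_Cyclotomic prim) /PhiQ -map_poly_comp.
  by apply: eq_map_poly => x /=; rewrite ratr_int.
by rewrite -e -dv.
Qed.

Lemma extract h : Rep z h 0 -> exists N D : {poly rat},
    [/\ D != 0, coprimep D (PhiQ n), PhiQ n %| N & h = tofrac N / tofrac D].
Proof.
move=> [A [B [hB -> h0]]].
have hA : ev z A = 0.
  have : ev z A / ev z B == 0 by rewrite -h0.
  by rewrite mulf_eq0 invr_eq0 (negbTE hB) orbF => /eqP.
have Bnz : B != 0 by apply: contraNneq hB => ->; rewrite ev0.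
have Pnz : PhiQ n != 0.
  apply: monic_neq0; rewrite /PhiQ monicE lead_coef_map_inj ?(monicP (Cyclotomic_monic n)) //.
  exact: intr_inj.
exists A, B; split => //; last by rewrite key hA.
set g := gcdp B (PhiQ n).
have gP : g %| PhiQ n by rewrite dvdp_gcdr.
have gB : g %| B by rewrite dvdp_gcdl.
set hh := PhiQ n %/ g.
have Ph : PhiQ n = hh * g by rewrite divpK.
have gnz : g != 0 by apply: contraNneq Pnz => g0; rewrite Ph g0 mulr0.
have hnz : hh != 0 by apply: contraNneq Pnz => h0'; rewrite Ph h0' mul0r.
have e0 : ev z hh * ev z g = 0 by rewrite -evM -Ph; apply/eqP; rewrite -key dvdpp.
have hg : ev z g != 0.
  apply/negP => /eqP eg; move: hB; rewrite -key.
  have : PhiQ n %| g by rewrite key eg.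
  by move=> /dvdp_trans /(_ gB) ->.
have : ev z hh = 0 by move/eqP: e0; rewrite mulf_eq0 (negbTE hg) orbF => /eqP.
move/eqP; rewrite -key => /(dvdp_leq hnz).
rewrite coprimep_def -/g {1}Ph size_mul // => hs.
have hg0 : (0 < size g)%N by rewrite size_poly_gt0.
have : (size g <= 1)%N.
  have hh0 : (0 < size hh)%N by rewrite size_poly_gt0.
  move: hs; lia.
move=> h1; apply/eqP; lia.
Qed.

End Key.

End Km.
Import Km.

Local Open Scope ring_scope.
Arguments Rep_mul {z f g v w}. Arguments Rep_add {z f g v w}. Arguments Rep_opp {z f v}.
Arguments Rep_sum {z m F G}. Arguments D_neq0 {z n} prim nodd {k}.
Arguments lhs_val {z n} prim nodd {s}. Arguments case1 {z n} prim nodd {r}.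
Arguments case3 {z n} prim nodd {r}. Arguments extract {z n} prim {h}.

Lemma Rep_div (z : algC) (a b : {poly rat}) :
  ev z b != 0 -> Rep z (tofrac a / tofrac b) (ev z a / ev z b).
Proof. by move=> hb; exists a, b. Qed.

Lemma qv_qpoch (a b : {poly rat}) k : qpoch (tofrac a) (tofrac b) k = tofrac (qpoch a b k) :> ratfun.
Proof. by rewrite qpoch_rmorph. Qed.

Lemma Rep_term (z : algC) k :
  qpoch (z ^+ 4) (z ^+ 4) k != 0 ->
  Rep z (qpoch qv (qv ^+ 4) k ^+ 2 / qpoch (qv ^+ 4) (qv ^+ 4) k ^+ 2 * qv ^+ (2 * k))
        (qpoch z (z ^+ 4) k ^+ 2 / qpoch (z ^+ 4) (z ^+ 4) k ^+ 2 * z ^+ (2 * k)).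
Proof.
move=> nz.
have nz' : ev z (qpoch ('X ^+ 4) ('X ^+ 4) k ^+ 2) != 0.
  by rewrite evXn ev_qpoch evXn evX expf_neq0.
have := Rep_mul (@Rep_div z (qpoch 'X ('X ^+ 4) k ^+ 2) _ nz') (Rep_poly z ('X ^+ (2 * k))).
rewrite !evXn !ev_qpoch !evXn !evX.
by rewrite /qv -!tofracXn !qv_qpoch -!tofracXn.
Qed.

Lemma Rep_rhs (z : algC) k :
  qpoch (z ^+ 4) (z ^+ 4) k != 0 ->
  Rep z (qpoch (qv ^+ 3) (qv ^+ 4) k / qpoch (qv ^+ 4) (qv ^+ 4) k)
        (qpoch (z ^+ 3) (z ^+ 4) k / qpoch (z ^+ 4) (z ^+ 4) k).
Proof.
move=> nz.
have nz' : ev z (qpoch ('X ^+ 4) ('X ^+ 4) k) != 0.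
  by rewrite ev_qpoch evXn evX.
have := @Rep_div z (qpoch ('X ^+ 3) ('X ^+ 4) k) _ nz'.
rewrite !ev_qpoch !evXn !evX.
by rewrite /qv -!tofracXn !qv_qpoch.
Qed.

Theorem theorem1 (n : nat) (hn : (0 < n)%N) :
  ((n %% 4 = 1)%N ->
     cong_ratfun (lhs_sum n)
       (qpoch (qv ^+ 3) (qv ^+ 4) ((n - 1) %/ 4)
          / qpoch (qv ^+ 4) (qv ^+ 4) ((n - 1) %/ 4))
       (PhiQ n)) /\
  ((n %% 4 = 3)%N -> cong_ratfun (lhs_sum n) 0 (PhiQ n)).
Proof.
have [z prim] := C_prim_root_exists hn.
have hL : odd n -> Rep z (lhs_sum n)
   (\sum_(0 <= k < n) qpoch z (z ^+ 4) k ^+ 2 / qpoch (z ^+ 4) (z ^+ 4) k ^+ 2 * z ^+ (2 * k)).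
  move=> nodd; apply: Rep_sum => k kn; apply: Rep_term.
  exact: (D_neq0 prim nodd kn).
split => h4.
  set r := ((n - 1) %/ 4)%N.
  have hnr : n = (4 * r + 1)%N by rewrite /r; have := divn_eq n 4; lia.
  have nodd : odd n by rewrite hnr oddD oddM.
  have hs : z ^+ (4 * r + 1) = 1 by rewrite -hnr (prim_expr_order prim).
  have rn : (r < n)%N by lia.
  have := Rep_add (hL nodd) (Rep_opp (@Rep_rhs z r (D_neq0 prim nodd rn))).
  rewrite (lhs_val prim nodd hs rn) (case1 prim nodd hnr) subrr.
  exact: (extract prim).
set r := (n %/ 4)%N.
have hnr : n = (4 * r + 3)%N by rewrite /r; have := divn_eq n 4; lia.
have nodd : odd n by rewrite hnr oddD oddM.
have hs : z ^+ (4 * (3 * r + 2) + 1) = 1.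
  have -> : (4 * (3 * r + 2) + 1 = n * 3)%N by lia.
  by rewrite exprM (prim_expr_order prim) expr1n.
have sn : (3 * r + 2 < n)%N by lia.
have := hL nodd.
rewrite (lhs_val prim nodd hs sn) (case3 prim nodd hnr) mulr0 => hR.
rewrite /cong_ratfun; apply: (extract prim); by rewrite subr0.
Qed.
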